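(* Let $f(X,I)=f_0(I)+f_1(I)X+f_2(I)X^2$ be an $X^2$-model with $f_{20}:=f_2(0)\neq1$, and for $\beta=(\beta_1,\beta_2)$, $\beta_1>\beta_2$, let $\theta_i:=A_i(1)-A_i(0)$, $i=1,2$. Let $Y_-\le Y_+$ denote the zeros (when real) of $z\mapsto h_f(z,1)-h_f(z,0)=(1-f_{20})(z-Y_+)(z-Y_-)$. (i) $\theta_1=\theta_2=0$ if and only if $Y_\pm$ are real and $(\beta_1,\beta_2)=(Y_+,Y_-)$. (ii) If $f$ is admissible, then there exists an $f$-compatible $\beta$ with $\theta_1=\theta_2=0$ if and only if $(Y_+,Y_-)\in\mathcal{B}_f$.
   Context: $f_0,f_1,f_2$ smooth on $[0,\infty)$; $\lambda:=f_0(1)$, $P_f(I):=(f_0(I)-\lambda I)/(1-I)$ (smoothly extended to $I=1$), $h_f(z,I):=P_f(I)+zf_1(I)+z^2(I+(1-I)f_2(I))$, $A_i(I):=h_f(\beta_i,I)/(\beta_j-\beta_i)$ for $\{i,j\}=\{1,2\}$. $\beta$ with $\beta_1>\beta_2$ is $f$-compatible if $\beta_2\le\lambda\le\beta_1$ and $A_1,A_2\ge0$ on $[0,1]$; $\mathcal{B}_f$ is the set of $f$-compatible pairs, and $f$ is admissible iff $\mathcal{B}_f\ne\emptyset$. (In the associated SSISS model, $A_i(I)$ is the transfer rate out of compartment $S_i$ at $S_j=0$.) *)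

(* Defs.v *)
From Stdlib Require Import Reals.
From Coquelicot Require Import Coquelicot.
Open Scope R_scope.

Definition smooth_R (g : R -> R) : Prop :=
  forall (n : nat) (x : R), ex_derive_n g n x.

Definition smooth_nonneg (f : R -> R) : Prop :=
  exists g : R -> R, smooth_R g /\ forall x, 0 <= x -> f x = g x.

Definition lam (f0 : R -> R) : R := f0 1.

Definition Pquot (f0 : R -> R) (I : R) : R := (f0 I - lam f0 * I) / (1 - I).

Definition Pf (f0 : R -> R) (I : R) : R :=
  if Req_EM_T I 1 then real (Lim (Pquot f0) 1) else Pquot f0 I.

Definition hf (f0 f1 f2 : R -> R) (z I : R) : R :=
  Pf f0 I + z * f1 I + z ^ 2 * (I + (1 - I) * f2 I).

Definition Ai (f0 f1 f2 : R -> R) (bi bj : R) (I : R) : R :=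
  hf f0 f1 f2 bi I / (bj - bi).

Definition compatible (f0 f1 f2 : R -> R) (b1 b2 : R) : Prop :=
  b1 > b2 /\ b2 <= lam f0 <= b1 /\
  (forall I, 0 <= I <= 1 -> 0 <= Ai f0 f1 f2 b1 b2 I /\ 0 <= Ai f0 f1 f2 b2 b1 I).

Definition admissible (f0 f1 f2 : R -> R) : Prop :=
  exists b1 b2, compatible f0 f1 f2 b1 b2.

Definition theta1 (f0 f1 f2 : R -> R) (b1 b2 : R) : R :=
  Ai f0 f1 f2 b1 b2 1 - Ai f0 f1 f2 b1 b2 0.

Definition theta2 (f0 f1 f2 : R -> R) (b1 b2 : R) : R :=
  Ai f0 f1 f2 b2 b1 1 - Ai f0 f1 f2 b2 b1 0.

Definition Yroots (f0 f1 f2 : R -> R) (Yp Ym : R) : Prop :=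
  Ym <= Yp /\
  forall z, hf f0 f1 f2 z 1 - hf f0 f1 f2 z 0 = (1 - f2 0) * (z - Yp) * (z - Ym).

(* Main.v *)
Require Import Defs.
From Stdlib Require Import Reals Lra.
From Coquelicot Require Import Coquelicot.
Open Scope R_scope.

Lemma D_form (f0 f1 f2 : R -> R) z :
  hf f0 f1 f2 z 1 - hf f0 f1 f2 z 0 =
  (1 - f2 0) * z ^ 2 + (f1 1 - f1 0) * z + (Pf f0 1 - Pf f0 0).
Proof. unfold hf. ring. Qed.

Lemma th1_eq (f0 f1 f2 : R -> R) b1 b2 : b1 > b2 ->
  (theta1 f0 f1 f2 b1 b2 = 0 <-> hf f0 f1 f2 b1 1 - hf f0 f1 f2 b1 0 = 0).
Proof.
  intros H. unfold theta1, Ai.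
  assert (E : hf f0 f1 f2 b1 1 / (b2 - b1) - hf f0 f1 f2 b1 0 / (b2 - b1)
     = (hf f0 f1 f2 b1 1 - hf f0 f1 f2 b1 0) / (b2 - b1)) by (field; lra).
  rewrite E. split; intro K.
  - assert (b2 - b1 <> 0) by lra.
    apply Rmult_eq_reg_r with (/ (b2 - b1)). unfold Rdiv in K. lra.
    apply Rinv_neq_0_compat; auto.
  - rewrite K. unfold Rdiv. ring.
Qed.

Lemma th2_eq (f0 f1 f2 : R -> R) b1 b2 : b1 > b2 ->
  (theta2 f0 f1 f2 b1 b2 = 0 <-> hf f0 f1 f2 b2 1 - hf f0 f1 f2 b2 0 = 0).
Proof.
  intros H. unfold theta2, Ai.
  assert (E : hf f0 f1 f2 b2 1 / (b1 - b2) - hf f0 f1 f2 b2 0 / (b1 - b2)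
     = (hf f0 f1 f2 b2 1 - hf f0 f1 f2 b2 0) / (b1 - b2)) by (field; lra).
  rewrite E. split; intro K.
  - assert (b1 - b2 <> 0) by lra.
    apply Rmult_eq_reg_r with (/ (b1 - b2)). unfold Rdiv in K. lra.
    apply Rinv_neq_0_compat; auto.
  - rewrite K. unfold Rdiv. ring.
Qed.

Lemma part1 (f0 f1 f2 : R -> R) (Hf20 : f2 0 <> 1) b1 b2 : b1 > b2 ->
  (theta1 f0 f1 f2 b1 b2 = 0 /\ theta2 f0 f1 f2 b1 b2 = 0 <->
      exists Yp Ym, Yroots f0 f1 f2 Yp Ym /\ b1 = Yp /\ b2 = Ym).
Proof.
  intros H. rewrite (th1_eq f0 f1 f2 b1 b2 H), (th2_eq f0 f1 f2 b1 b2 H).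
  rewrite !D_form. split.
  - intros [K1 K2]. exists b1, b2. split; [|auto]. split; [lra|].
    intro z. rewrite D_form.
    set (c := 1 - f2 0) in *. set (B := f1 1 - f1 0) in *.
    set (C := Pf f0 1 - Pf f0 0) in *.
    assert (HB : B = - c * (b1 + b2)).
    { assert (E : (c * (b1 + b2) + B) * (b1 - b2) = 0) by nra.
      apply Rmult_integral in E. destruct E; lra. }
    assert (HC : C = c * b1 * b2) by (subst B; nra).
    rewrite HB, HC. ring.
  - intros [Yp [Ym [[_ HY] [-> ->]]]].
    rewrite <- !D_form, !HY. split; ring.
Qed.

Theorem corollary5p4 (f0 f1 f2 : R -> R)
  (Hf0 : smooth_nonneg f0) (Hf1 : smooth_nonneg f1) (Hf2 : smooth_nonneg f2)
  (Hf20 : f2 0 <> 1) :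
  (forall b1 b2 : R, b1 > b2 ->
     (theta1 f0 f1 f2 b1 b2 = 0 /\ theta2 f0 f1 f2 b1 b2 = 0 <->
      exists Yp Ym, Yroots f0 f1 f2 Yp Ym /\ b1 = Yp /\ b2 = Ym)) /\
  (admissible f0 f1 f2 ->
     ((exists b1 b2, compatible f0 f1 f2 b1 b2 /\
         theta1 f0 f1 f2 b1 b2 = 0 /\ theta2 f0 f1 f2 b1 b2 = 0) <->
      exists Yp Ym, Yroots f0 f1 f2 Yp Ym /\ compatible f0 f1 f2 Yp Ym)).
Proof.
  split.
  - intros b1 b2 H. apply part1; auto.
  - intros _. split.
    + intros [b1 [b2 [Hc Ht]]].
      destruct Hc as [Hgt Hrest] eqn:Ec.
      destruct (proj1 (part1 f0 f1 f2 Hf20 b1 b2 Hgt) Ht) as [Yp [Ym [HY [-> ->]]]].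
      exists Yp, Ym. split; auto.
    + intros [Yp [Ym [HY Hc]]]. exists Yp, Ym. split; auto.
      apply (part1 f0 f1 f2 Hf20 Yp Ym (proj1 Hc)).
      exists Yp, Ym; auto.
Qed.
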